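(* Let $f\in\mathrm{Homeo}_+(\mathbb{R})$ satisfy $f(x+1)=f(x)+2$ for all $x$ and $f(0)=0$, and let $\theta_f$ be defined on $PL_2(\mathbb{R})$ as in the context. Then $\theta_f:PL_2(\mathbb{R})\to\mathrm{Homeo}_+(\mathbb{R})$ is a group homomorphism.
   Context: $\mathbb{Q}_2$ denotes the dyadic rationals. $GA(\mathbb{Q}_2)$ is the group of affine maps $x\mapsto 2^nx+r$ ($n\in\mathbb{Z}$, $r\in\mathbb{Q}_2$); $T_r(x)=x+r$, $D(x)=2x$. There is a unique injective homomorphism $\theta_f:GA(\mathbb{Q}_2)\to\mathrm{Homeo}_+(\mathbb{R})$ with $\theta_f(T_1)=T_1$, $\theta_f(D)=f$. For $r=p/2^q\in\mathbb{Q}_2$ put $\bar r=f^{-q}(p)$ (well defined, strictly increasing). $PL_2(\mathbb{R})$ is the group of homeomorphisms $h$ of $\mathbb{R}$ that are piecewise linear with a locally finite set of break points, all in $\mathbb{Q}_2$, such that near each non-break point $h$ agrees with an element of $GA(\mathbb{Q}_2)$. For $h\in PL_2(\mathbb{R})$ choose a strictly increasing sequence $(x_n)_{n\in\mathbb{Z}}$ in $\mathbb{Q}_2$ with $x_n\to\pm\infty$ as $n\to\pm\infty$ and $\gamma_n\in GA(\mathbb{Q}_2)$ with $h=\gamma_n$ on $[x_n,x_{n+1}]$, and define $\theta_f(h)(t)=\theta_f(\gamma_n)(t)$ for $t\in[\bar x_n,\bar x_{n+1})$; this is independent of the choices and yields an increasing homeomorphism of $\mathbb{R}$. *)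

(* Defs.v *)
From Stdlib Require Import Reals Lra ZArith List ClassicalEpsilon.
Open Scope R_scope.

Definition dyadic (r : R) : Prop :=
  exists (p : Z) (q : nat), r = IZR p / 2 ^ q.

Definition dyad_rep (r : R) : Z * nat :=
  epsilon (inhabits (0%Z, 0%nat))
    (fun pq => r = IZR (fst pq) / 2 ^ (snd pq)).

Definition homeo (h : R -> R) : Prop :=
  continuity h /\
  exists g : R -> R, continuity g /\
    (forall x, g (h x) = x) /\ (forall y, h (g y) = y).

Definition homeo_plus (h : R -> R) : Prop :=
  homeo h /\ (forall x y, x < y -> h x < h y).

Definition finv (f : R -> R) (y : R) : R :=
  epsilon (inhabits 0) (fun x => f x = y).

Definition fZ (f : R -> R) (k : Z) (x : R) : R :=
  match k with
  | Z0 => x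
  | Zpos p => Nat.iter (Pos.to_nat p) f x
  | Zneg p => Nat.iter (Pos.to_nat p) (finv f) x
  end.

Definition GA_elt := (Z * R)%type.
Definition GA_valid (g : GA_elt) : Prop := dyadic (snd g).
Definition ga_app (g : GA_elt) (x : R) : R := powerRZ 2 (fst g) * x + snd g.

(* theta_f on GA(Q_2): theta_f(T_1) = T_1, theta_f(D) = f, hence
   theta_f(T_{p/2^q}) = f^{-q} o T_p o f^q  and
   theta_f(x |-> 2^n x + r) = theta_f(T_r) o f^n. *)
Definition theta_GA (f : R -> R) (g : GA_elt) (t : R) : R :=
  let pq := dyad_rep (snd g) in
  fZ f (- Z.of_nat (snd pq))
     (fZ f (Z.of_nat (snd pq)) (fZ f (fst g) t) + IZR (fst pq)).

Definition bar (f : R -> R) (r : R) : R :=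
  let pq := dyad_rep r in fZ f (- Z.of_nat (snd pq)) (IZR (fst pq)).

Definition locally_finite (B : R -> Prop) : Prop :=
  forall a b : R, exists l : list R, forall x, B x -> a <= x <= b -> In x l.

Definition is_PL2 (h : R -> R) : Prop :=
  homeo h /\
  exists B : R -> Prop,
    (forall b, B b -> dyadic b) /\ locally_finite B /\
    (forall x, ~ B x ->
       exists eps, 0 < eps /\ exists g : GA_elt, GA_valid g /\
         forall y, Rabs (y - x) < eps -> h y = ga_app g y).

Definition PL_data (h : R -> R) (d : (Z -> R) * (Z -> GA_elt)) : Prop :=
  let x := fst d in let gam := snd d in
  (forall n, x n < x (n + 1)%Z) /\
  (forall n, dyadic (x n)) /\
  (forall M, exists n, M < x n) /\
  (forall M, exists n, x n < M) /\
  (forall n, GA_valid (gam n)) /\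
  (forall n y, x n <= y <= x (n + 1)%Z -> h y = ga_app (gam n) y).

Definition theta_PL (f : R -> R) (h : R -> R) (t : R) : R :=
  let d := epsilon (inhabits ((fun _ : Z => 0), (fun _ : Z => (0%Z, 0))))
             (PL_data h) in
  let n := epsilon (inhabits 0%Z)
             (fun n => bar f (fst d n) <= t < bar f (fst d (n + 1)%Z)) in
  theta_GA f (snd d n) t.

(* Main.v *)
Require Import Defs.
From Stdlib Require Import Reals Lra Lia ZArith List ClassicalEpsilon Classical.
Open Scope R_scope.

Definition Fok (f : R -> R) : Prop :=
  homeo_plus f /\ (forall x, f (x + 1) = f x + 2) /\ f 0 = 0.

Lemma f_mono f : Fok f -> forall x y, x < y -> f x < f y.
Proof. intros [[_ H] _]; exact H. Qed.

Lemma f_inj f : Fok f -> forall x y, f x = f y -> x = y.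
Proof.
  intros Hf x y E. destruct (Rtotal_order x y) as [H|[H|H]]; auto;
  apply (f_mono f Hf) in H; lra.
Qed.

Lemma finv_r f : Fok f -> forall y, f (finv f y) = y.
Proof.
  intros [[[_ [g [_ [_ Hg]]]] _] _] y. unfold finv.
  apply (epsilon_spec (inhabits 0) (fun x => f x = y)). exists (g y); auto.
Qed.

Lemma finv_l f : Fok f -> forall x, finv f (f x) = x.
Proof. intros Hf x. apply (f_inj f Hf). apply finv_r; auto. Qed.

Lemma finv_mono f : Fok f -> forall x y, x < y -> finv f x < finv f y.
Proof.
  intros Hf x y H. destruct (Rlt_le_dec (finv f x) (finv f y)) as [h|h]; auto.
  destruct h as [h|h].
  - apply (f_mono f Hf) in h. rewrite !finv_r in h; auto. lra.
  - apply (f_equal f) in h. rewrite !finv_r in h; auto. lra.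
Qed.

Lemma f_int f : Fok f -> forall z x, f (x + IZR z) = f x + 2 * IZR z.
Proof.
  intros Hf. destruct Hf as [H0 [H1 H2]].
  induction z using Z.peano_ind; intro x.
  - rewrite Rplus_0_r; ring.
  - rewrite succ_IZR. replace (x + (IZR z + 1)) with ((x + IZR z) + 1) by ring.
    rewrite H1, IHz. ring.
  - rewrite <- Z.sub_1_r, minus_IZR.
    assert (E := H1 (x + (IZR z - 1))).
    replace (x + (IZR z - 1) + 1) with (x + IZR z) by ring.
    replace (x + (IZR z - 1) + 1) with (x + IZR z) in E by ring.
    rewrite IHz in E. lra.
Qed.

Lemma fZ_nat f : forall n x, fZ f (Z.of_nat n) x = Nat.iter n f x.
Proof.
  intros [|n] x; simpl; auto. rewrite SuccNat2Pos.id_succ. reflexivity.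
Qed.

Lemma fZ_negnat f : forall n x, fZ f (- Z.of_nat n) x = Nat.iter n (finv f) x.
Proof.
  intros [|n] x; simpl; auto. rewrite SuccNat2Pos.id_succ. reflexivity.
Qed.

Lemma Z_cases (k : Z) : (exists n, k = Z.of_nat n) \/ (exists n, k = (- Z.of_nat (S n))%Z).
Proof.
  destruct (Z_le_gt_dec 0 k).
  - left. exists (Z.to_nat k). rewrite Z2Nat.id; auto.
  - right. exists (Z.to_nat (- k - 1)). rewrite Nat2Z.inj_succ, Z2Nat.id; lia.
Qed.

Lemma fZ_succ f : Fok f -> forall k x, fZ f (Z.succ k) x = f (fZ f k x).
Proof.
  intros Hf k x. destruct (Z_cases k) as [[n ->]|[n ->]].
  - rewrite <- Nat2Z.inj_succ, !fZ_nat. reflexivity.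
  - replace (Z.succ (- Z.of_nat (S n))) with (- Z.of_nat n)%Z by lia.
    rewrite !fZ_negnat. simpl. rewrite finv_r; auto.
Qed.

Lemma fZ_pred f : Fok f -> forall k x, fZ f (Z.pred k) x = finv f (fZ f k x).
Proof.
  intros Hf k x. destruct (Z_cases (-k)) as [[n E]|[n E]].
  - replace k with (- Z.of_nat n)%Z by lia.
    replace (Z.pred (- Z.of_nat n)) with (- Z.of_nat (S n))%Z by lia.
    rewrite !fZ_negnat. reflexivity.
  - replace k with (Z.of_nat (S n)) by lia.
    replace (Z.pred (Z.of_nat (S n))) with (Z.of_nat n) by lia.
    rewrite !fZ_nat. simpl. rewrite finv_l; auto.
Qed.

Lemma fZ_add f : Fok f -> forall a b x, fZ f (a + b) x = fZ f a (fZ f b x).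
Proof.
  intros Hf a. induction a using Z.peano_ind; intros b x.
  - reflexivity.
  - rewrite Z.add_succ_l, !fZ_succ, IHa; auto.
  - rewrite Z.add_pred_l, !fZ_pred, IHa; auto.
Qed.

Lemma fZ_inv f : Fok f -> forall k x, fZ f (- k) (fZ f k x) = x.
Proof. intros Hf k x. rewrite <- fZ_add; auto. rewrite Z.add_opp_diag_l. reflexivity. Qed.

Lemma fZ_inv' f : Fok f -> forall k x, fZ f k (fZ f (- k) x) = x.
Proof. intros Hf k x. rewrite <- fZ_add; auto. rewrite Z.add_opp_diag_r. reflexivity. Qed.

Lemma fZ_mono f : Fok f -> forall k x y, x < y -> fZ f k x < fZ f k y.
Proof.
  intros Hf k. induction k using Z.peano_ind; intros x y H.
  - exact H.
  - rewrite !fZ_succ; auto. apply (f_mono f Hf); auto.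
  - rewrite !fZ_pred; auto. apply (finv_mono f Hf); auto.
Qed.

Lemma fZ_le f : Fok f -> forall k x y, x <= y -> fZ f k x <= fZ f k y.
Proof.
  intros Hf k x y [H|H]. left; apply fZ_mono; auto. subst; lra.
Qed.

Lemma fZ_lt_inv f : Fok f -> forall k x y, fZ f k x < fZ f k y -> x < y.
Proof.
  intros Hf k x y H. destruct (Rlt_le_dec x y) as [h|h]; auto.
  apply (fZ_le f Hf k) in h. lra.
Qed.

Lemma fZ_0 f : Fok f -> forall k, fZ f k 0 = 0.
Proof.
  intros Hf k. induction k using Z.peano_ind.
  - reflexivity.
  - rewrite fZ_succ, IHk; auto. apply Hf.
  - rewrite fZ_pred, IHk; auto. pose proof Hf as [_ [_ H0]].
    rewrite <- H0 at 1. apply finv_l; auto.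
Qed.

Lemma fZ_nat_int f : Fok f -> forall n w p,
  fZ f (Z.of_nat n) (w + IZR p) = fZ f (Z.of_nat n) w + IZR (p * 2 ^ Z.of_nat n).
Proof.
  intros Hf n. induction n; intros w p.
  - simpl. rewrite Z.mul_1_r. reflexivity.
  - rewrite Nat2Z.inj_succ, !fZ_succ, IHn, f_int; auto.
    rewrite Z.pow_succ_r by lia. rewrite !mult_IZR. ring.
Qed.

Definition Tq f (p : Z) (q : nat) (y : R) : R :=
  fZ f (- Z.of_nat q) (fZ f (Z.of_nat q) y + IZR p).

Lemma Tq_scale f : Fok f -> forall p q k y,
  Tq f (p * 2 ^ Z.of_nat k) (q + k) y = Tq f p q y.
Proof.
  intros Hf p q k y. unfold Tq.
  rewrite Nat2Z.inj_add.
  replace (Z.of_nat q + Z.of_nat k)%Z with (Z.of_nat k + Z.of_nat q)%Z by lia.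
  rewrite fZ_add, <- fZ_nat_int by auto.
  replace (- (Z.of_nat k + Z.of_nat q))%Z with (- Z.of_nat q + - Z.of_nat k)%Z by lia.
  rewrite fZ_add, fZ_inv; auto.
Qed.

Lemma pow2_pos (n : nat) : 0 < 2 ^ n.
Proof. apply pow_lt; lra. Qed.

Lemma Tq_rep f : Fok f -> forall p q p' q' y,
  IZR p / 2 ^ q = IZR p' / 2 ^ q' -> Tq f p q y = Tq f p' q' y.
Proof.
  intros Hf p q p' q' y E.
  rewrite <- (Tq_scale f Hf p q q'), <- (Tq_scale f Hf p' q' q).
  rewrite Nat.add_comm. f_equal. apply eq_IZR. rewrite !mult_IZR, <- !pow_IZR.
  pose proof (pow2_pos q). pose proof (pow2_pos q').
  replace (IZR 2) with 2 by reflexivity.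
  apply (Rmult_eq_reg_r (/ (2^q * 2^q'))).
  - field_simplify; try lra.
  - apply Rinv_neq_0_compat. nra.
Qed.

Lemma dyad_rep_spec r : dyadic r ->
  r = IZR (fst (dyad_rep r)) / 2 ^ (snd (dyad_rep r)).
Proof.
  intros [p [q E]]. unfold dyad_rep.
  apply (epsilon_spec (inhabits (0%Z, 0%nat))
    (fun pq => r = IZR (fst pq) / 2 ^ (snd pq))). exists (p, q); auto.
Qed.

Definition Tr f (r : R) (y : R) : R :=
  Tq f (fst (dyad_rep r)) (snd (dyad_rep r)) y.

Lemma Tr_eq f : Fok f -> forall r p q y, r = IZR p / 2 ^ q -> Tr f r y = Tq f p q y.
Proof.
  intros Hf r p q y E. unfold Tr. apply Tq_rep; auto.
  rewrite <- dyad_rep_spec, E; auto. exists p, q; auto.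
Qed.

Lemma theta_GA_eq f g t : theta_GA f g t = Tr f (snd g) (fZ f (fst g) t).
Proof. reflexivity. Qed.

Lemma bar_eq f : Fok f -> forall r, bar f r = Tr f r 0.
Proof. intros Hf r. unfold bar, Tr, Tq. rewrite fZ_0, Rplus_0_l; auto. Qed.

Lemma dyadic_IZR z : dyadic (IZR z).
Proof. exists z, 0%nat. simpl. field. Qed.

Lemma common_denom r s : dyadic r -> dyadic s ->
  exists p1 p2 q, r = IZR p1 / 2 ^ q /\ s = IZR p2 / 2 ^ q.
Proof.
  intros [p1 [q1 E1]] [p2 [q2 E2]].
  exists (p1 * 2 ^ Z.of_nat q2)%Z, (p2 * 2 ^ Z.of_nat q1)%Z, (q1 + q2)%nat.
  rewrite !mult_IZR, <- !pow_IZR, pow_add. replace (IZR 2) with 2 by reflexivity.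
  pose proof (pow2_pos q1). pose proof (pow2_pos q2).
  split; [rewrite E1|rewrite E2]; field; lra.
Qed.

Lemma dyadic_add r s : dyadic r -> dyadic s -> dyadic (r + s).
Proof.
  intros Hr Hs. destruct (common_denom r s Hr Hs) as [p1 [p2 [q [-> ->]]]].
  exists (p1 + p2)%Z, q. rewrite plus_IZR. pose proof (pow2_pos q). field. lra.
Qed.

Lemma dyadic_opp r : dyadic r -> dyadic (- r).
Proof.
  intros [p [q ->]]. exists (- p)%Z, q. rewrite opp_IZR. pose proof (pow2_pos q). field. lra.
Qed.

Lemma dyadic_sub r s : dyadic r -> dyadic s -> dyadic (r - s).
Proof. intros. apply dyadic_add; auto. apply dyadic_opp; auto. Qed.

Lemma dyadic_pow_nat n r : dyadic r -> dyadic (2 ^ n * r).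
Proof.
  intros [p [q ->]]. exists (p * 2 ^ Z.of_nat n)%Z, q. rewrite mult_IZR, <- pow_IZR.
  replace (IZR 2) with 2 by reflexivity. pose proof (pow2_pos q). field. lra.
Qed.

Lemma dyadic_div_nat n r : dyadic r -> dyadic (r / 2 ^ n).
Proof.
  intros [p [q ->]]. exists p, (q + n)%nat. rewrite pow_add.
  pose proof (pow2_pos q). pose proof (pow2_pos n). field. lra.
Qed.

Lemma powerRZ_cases (k : Z) :
  (exists n, k = Z.of_nat n /\ powerRZ 2 k = 2 ^ n) \/
  (exists n, k = (- Z.of_nat n)%Z /\ powerRZ 2 k = / 2 ^ n).
Proof.
  destruct (Z_le_gt_dec 0 k).
  - left. exists (Z.to_nat k). rewrite Z2Nat.id by auto. split; auto.
    rewrite pow_powerRZ, Z2Nat.id; auto.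
  - right. exists (Z.to_nat (- k)). rewrite Z2Nat.id by lia. split; [lia|].
    rewrite pow_powerRZ, Z2Nat.id by lia. rewrite <- powerRZ_neg', Z.opp_involutive. auto.
Qed.

Lemma dyadic_pow k r : dyadic r -> dyadic (powerRZ 2 k * r).
Proof.
  intros H. destruct (powerRZ_cases k) as [[n [_ ->]]|[n [_ ->]]].
  - apply dyadic_pow_nat; auto.
  - replace (/ 2 ^ n * r) with (r / 2 ^ n) by (unfold Rdiv; ring). apply dyadic_div_nat; auto.
Qed.

Lemma ga_dyadic g y : GA_valid g -> dyadic y -> dyadic (ga_app g y).
Proof. intros Hg Hy. unfold ga_app. apply dyadic_add; auto. apply dyadic_pow; auto. Qed.

Lemma Tq_add f : Fok f -> forall p1 p2 q y, Tq f p1 q (Tq f p2 q y) = Tq f (p1 + p2) q y.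
Proof.
  intros Hf p1 p2 q y. unfold Tq. rewrite fZ_inv', plus_IZR; auto. f_equal. ring.
Qed.

Lemma Tr_add f : Fok f -> forall r s y, dyadic r -> dyadic s ->
  Tr f r (Tr f s y) = Tr f (r + s) y.
Proof.
  intros Hf r s y Hr Hs. destruct (common_denom r s Hr Hs) as [p1 [p2 [q [E1 E2]]]].
  rewrite (Tr_eq f Hf r p1 q), (Tr_eq f Hf s p2 q), (Tr_eq f Hf (r + s) (p1 + p2) q); auto.
  apply Tq_add; auto. rewrite E1, E2, plus_IZR. pose proof (pow2_pos q). field. lra.
Qed.

Lemma Tr_mono f : Fok f -> forall r x y, x < y -> Tr f r x < Tr f r y.
Proof.
  intros Hf r x y H. unfold Tr, Tq. apply fZ_mono; auto.
  apply Rplus_lt_compat_r. apply fZ_mono; auto.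
Qed.

Lemma Tr_pos f : Fok f -> forall r y, dyadic r -> 0 < r -> y < Tr f r y.
Proof.
  intros Hf r y [p [q E]] Hr. rewrite (Tr_eq f Hf r p q) by auto. unfold Tq.
  assert (0 < IZR p).
  { pose proof (pow2_pos q). assert (IZR p = r * 2 ^ q) by (rewrite E; field; lra). nra. }
  rewrite <- (fZ_inv f Hf (Z.of_nat q) y) at 1. apply fZ_mono; auto. lra.
Qed.

Lemma Tr_int f : Fok f -> forall z, Tr f (IZR z) 0 = IZR z.
Proof.
  intros Hf z. rewrite (Tr_eq f Hf _ z 0). unfold Tq. simpl. ring. simpl. field.
Qed.

Lemma Tr_F_nat f : Fok f -> forall n r y, dyadic r ->
  fZ f (Z.of_nat n) (Tr f r y) = Tr f (2 ^ n * r) (fZ f (Z.of_nat n) y).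
Proof.
  intros Hf n r y [p [q E]].
  rewrite (Tr_eq f Hf r p q) by auto.
  rewrite (Tr_eq f Hf (2 ^ n * r) (p * 2 ^ Z.of_nat n) q).
  2:{ rewrite E, mult_IZR, <- pow_IZR. replace (IZR 2) with 2 by reflexivity.
      pose proof (pow2_pos q). field. lra. }
  rewrite <- (Tq_scale f Hf p q n). unfold Tq.
  rewrite <- fZ_add by auto.
  replace (Z.of_nat n + - Z.of_nat (q + n))%Z with (- Z.of_nat q)%Z by lia.
  rewrite Nat2Z.inj_add, Z.add_comm, fZ_add; auto.
  rewrite <- !fZ_add by auto. rewrite Z.add_comm. reflexivity.
Qed.

Lemma Tr_F f : Fok f -> forall k r y, dyadic r ->
  fZ f k (Tr f r y) = Tr f (powerRZ 2 k * r) (fZ f k y).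
Proof.
  intros Hf k r y Hr. destruct (powerRZ_cases k) as [[n [-> ->]]|[n [-> ->]]].
  - apply Tr_F_nat; auto.
  - set (s := / 2 ^ n * r).
    assert (Hs : dyadic s).
    { unfold s. replace (/ 2 ^ n * r) with (r / 2 ^ n) by (unfold Rdiv; ring).
      apply dyadic_div_nat; auto. }
    pose proof (Tr_F_nat f Hf n s (fZ f (- Z.of_nat n) y) Hs) as E.
    rewrite fZ_inv' in E by auto.
    replace (2 ^ n * s) with r in E by (unfold s; pose proof (pow2_pos n); field; lra).
    rewrite <- E, fZ_inv; auto.
Qed.

Definition ga_comp (g1 g2 : GA_elt) : GA_elt :=
  ((fst g1 + fst g2)%Z, powerRZ 2 (fst g1) * snd g2 + snd g1).

Lemma ga_comp_app g1 g2 y : ga_app (ga_comp g1 g2) y = ga_app g1 (ga_app g2 y).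
Proof.
  unfold ga_app, ga_comp; simpl. rewrite powerRZ_add by lra. ring.
Qed.

Lemma ga_comp_valid g1 g2 : GA_valid g1 -> GA_valid g2 -> GA_valid (ga_comp g1 g2).
Proof.
  unfold GA_valid, ga_comp; simpl; intros. apply dyadic_add; auto. apply dyadic_pow; auto.
Qed.

Lemma theta_comp f : Fok f -> forall g1 g2 t, GA_valid g1 -> GA_valid g2 ->
  theta_GA f (ga_comp g1 g2) t = theta_GA f g1 (theta_GA f g2 t).
Proof.
  intros Hf [n1 r1] [n2 r2] t H1 H2. unfold GA_valid in *; simpl in *.
  rewrite !theta_GA_eq; simpl. rewrite Tr_F, Tr_add, fZ_add by (auto; apply dyadic_pow; auto).
  f_equal. ring.
Qed.

Lemma theta_bar f : Fok f -> forall g s, GA_valid g -> dyadic s ->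
  theta_GA f g (bar f s) = bar f (ga_app g s).
Proof.
  intros Hf [n r] s Hg Hs. unfold GA_valid in *; simpl in *.
  rewrite theta_GA_eq, !bar_eq by auto; simpl. rewrite Tr_F, fZ_0, Tr_add by (auto; apply dyadic_pow; auto).
  unfold ga_app; simpl. f_equal. ring.
Qed.

Lemma theta_mono f : Fok f -> forall g x y, x < y -> theta_GA f g x < theta_GA f g y.
Proof.
  intros Hf g x y H. rewrite !theta_GA_eq. apply Tr_mono; auto. apply fZ_mono; auto.
Qed.

Lemma theta_le_inv f : Fok f -> forall g x y, theta_GA f g x <= theta_GA f g y -> x <= y.
Proof.
  intros Hf g x y H. destruct (Rle_lt_dec x y) as [h|h]; auto.
  apply (theta_mono f Hf g) in h. lra.
Qed.

Lemma bar_mono f : Fok f -> forall r s, dyadic r -> dyadic s -> r < s -> bar f r < bar f s.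
Proof.
  intros Hf r s Hr Hs H. rewrite !bar_eq by auto.
  replace s with ((s - r) + r) by ring. rewrite <- Tr_add by (auto; apply dyadic_sub; auto).
  apply Tr_pos; auto. apply dyadic_sub; auto. lra.
Qed.

Lemma bar_le f : Fok f -> forall r s, dyadic r -> dyadic s -> r <= s -> bar f r <= bar f s.
Proof.
  intros Hf r s Hr Hs [H|H]. left; apply bar_mono; auto. subst; lra.
Qed.

Lemma bar_le_inv f : Fok f -> forall r s, dyadic r -> dyadic s -> bar f r <= bar f s -> r <= s.
Proof.
  intros Hf r s Hr Hs H. destruct (Rle_lt_dec r s) as [h|h]; auto.
  apply (bar_mono f Hf) in h; auto. lra.
Qed.

Lemma bar_lt_inv f : Fok f -> forall r s, dyadic r -> dyadic s -> bar f r < bar f s -> r < s.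
Proof.
  intros Hf r s Hr Hs H. destruct (Rlt_le_dec r s) as [h|h]; auto.
  apply (bar_le f Hf) in h; auto. lra.
Qed.

Lemma bar_int f : Fok f -> forall z, bar f (IZR z) = IZR z.
Proof. intros Hf z. rewrite bar_eq, Tr_int; auto. Qed.

Definition ga_inv (g : GA_elt) : GA_elt :=
  ((- fst g)%Z, - (powerRZ 2 (- fst g) * snd g)).

Lemma ga_inv_valid g : GA_valid g -> GA_valid (ga_inv g).
Proof. unfold GA_valid, ga_inv; simpl; intros. apply dyadic_opp, dyadic_pow; auto. Qed.

Lemma ga_inv_r g y : ga_app g (ga_app (ga_inv g) y) = y.
Proof.
  unfold ga_app, ga_inv; simpl. rewrite powerRZ_neg'.
  assert (0 < powerRZ 2 (fst g)) by (apply powerRZ_lt; lra). field. lra.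
Qed.

Lemma ga_mono g x y : x < y -> ga_app g x < ga_app g y.
Proof.
  unfold ga_app. intros. assert (0 < powerRZ 2 (fst g)) by (apply powerRZ_lt; lra). nra.
Qed.

Lemma ga_le g x y : x <= y -> ga_app g x <= ga_app g y.
Proof.
  unfold ga_app. intros. assert (0 < powerRZ 2 (fst g)) by (apply powerRZ_lt; lra). nra.
Qed.

Lemma ga_le_inv g x y : ga_app g x <= ga_app g y -> x <= y.
Proof.
  intros H. destruct (Rle_lt_dec x y) as [h|h]; auto. apply (ga_mono g) in h. lra.
Qed.

Lemma powerRZ2_lt (a b : Z) : (a < b)%Z -> powerRZ 2 a < powerRZ 2 b.
Proof.
  intros H. replace b with (a + (b - a))%Z by lia. rewrite powerRZ_add by lra.
  assert (0 < powerRZ 2 a) by (apply powerRZ_lt; lra).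
  destruct (powerRZ_cases (b - a)) as [[n [E ->]]|[n [E ->]]].
  - destruct n as [|n]; [lia|]. simpl. pose proof (pow2_pos n).
    assert (1 <= 2 ^ n).
    { clear. induction n; simpl; lra. }
    nra.
  - destruct n; [simpl in E; lia|]. lia.
Qed.

Lemma powerRZ2_inj (a b : Z) : powerRZ 2 a = powerRZ 2 b -> a = b.
Proof.
  intros E. destruct (Z.lt_total a b) as [h|[h|h]]; auto;
  apply powerRZ2_lt in h; lra.
Qed.

Lemma ga_two_points g g' u v : u < v -> ga_app g u = ga_app g' u ->
  ga_app g v = ga_app g' v -> g = g'.
Proof.
  destruct g as [n r], g' as [n' r']. unfold ga_app; simpl. intros H E1 E2.
  assert (powerRZ 2 n = powerRZ 2 n').
  { apply (Rmult_eq_reg_r (v - u)); [|lra]. lra. }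
  assert (n = n') by (apply powerRZ2_inj; auto). subst. f_equal. lra.
Qed.

Lemma seq_mono (x : Z -> R) : (forall n, x n < x (n + 1)%Z) ->
  forall i j, (i < j)%Z -> x i < x j.
Proof.
  intros H i j Hij. replace j with (i + Z.of_nat (S (Z.to_nat (j - i - 1))))%Z by lia.
  generalize (Z.to_nat (j - i - 1)). intro k. induction k.
  - simpl. apply H.
  - eapply Rlt_trans; [apply IHk|].
    replace (i + Z.of_nat (S (S k)))%Z with (i + Z.of_nat (S k) + 1)%Z by lia. apply H.
Qed.

Lemma seq_le (x : Z -> R) : (forall n, x n < x (n + 1)%Z) ->
  forall i j, (i <= j)%Z -> x i <= x j.
Proof.
  intros H i j Hij. destruct (Z.eq_dec i j). subst; lra. left; apply seq_mono; auto; lia.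
Qed.

Lemma bracket (x : Z -> R) t : (forall n, x n < x (n + 1)%Z) ->
  (exists a, x a <= t) -> (exists b, t < x b) -> exists n, x n <= t < x (n + 1)%Z.
Proof.
  intros H [a Ha] [b Hb].
  assert (Hab : (a < b)%Z).
  { destruct (Z_lt_le_dec a b); auto. pose proof (seq_le x H b a l). lra. }
  replace b with (a + Z.of_nat (Z.to_nat (b - a)))%Z in Hb by lia.
  generalize (Z.to_nat (b - a)) Hb. clear b Hb Hab. intros k. revert a Ha.
  induction k; intros a Ha Hb.
  - simpl in Hb. rewrite Z.add_0_r in Hb. lra.
  - destruct (Rle_lt_dec (x (a + 1)%Z) t) as [h|h].
    + apply (IHk (a + 1)%Z h). rewrite Nat2Z.inj_succ in Hb.
      replace (a + 1 + Z.of_nat k)%Z with (a + Z.succ (Z.of_nat k))%Z by lia. auto.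
    + exists a; split; auto.
Qed.

Lemma data_bracket f h d : Fok f -> PL_data h d -> forall t,
  exists n, bar f (fst d n) <= t < bar f (fst d (n + 1)%Z).
Proof.
  intros Hf [Hinc [Hdy [Hup [Hdown _]]]] t. apply bracket.
  - intro n. apply bar_mono; auto.
  - destruct (Hdown (IZR (- up (- t)))) as [n Hn]. exists n.
    apply (bar_mono f Hf) in Hn; auto; [|apply dyadic_IZR].
    rewrite bar_int in Hn by auto. rewrite opp_IZR in Hn.
    pose proof (archimed (- t)). lra.
  - destruct (Hup (IZR (up t))) as [n Hn]. exists n.
    apply (bar_mono f Hf) in Hn; auto; [|apply dyadic_IZR].
    rewrite bar_int in Hn by auto. pose proof (archimed t). lra.
Qed.

Lemma dyadic_Rmax a b : dyadic a -> dyadic b -> dyadic (Rmax a b).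
Proof. intros. unfold Rmax; destruct Rle_dec; auto. Qed.
Lemma dyadic_Rmin a b : dyadic a -> dyadic b -> dyadic (Rmin a b).
Proof. intros. unfold Rmin; destruct Rle_dec; auto. Qed.



Lemma L_agree f h a b g t : Fok f -> (exists d, PL_data h d) ->
  dyadic a -> dyadic b -> GA_valid g ->
  (forall y, a <= y <= b -> h y = ga_app g y) ->
  bar f a <= t <= bar f b -> theta_PL f h t = theta_GA f g t.
Proof.
  intros Hf Hex Ha Hb Hg Hagr Ht. unfold theta_PL.
  match goal with |- context [epsilon ?i (PL_data h)] => set (d := epsilon i (PL_data h)) end.
  assert (Hd : PL_data h d) by (apply epsilon_spec; auto).
  match goal with |- context [epsilon ?i ?P] => set (n := epsilon i P) end.
  assert (Hn : bar f (fst d n) <= t < bar f (fst d (n + 1)%Z)).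
  { unfold n. apply (epsilon_spec _ (fun n => bar f (fst d n) <= t < bar f (fst d (n + 1)%Z))).
    apply (data_bracket f h d Hf Hd). }
  clearbody n d. unfold GA_elt in *.
  destruct Hd as [Hinc [Hdy [_ [_ [Hval Hpc]]]]].
  set (xn := fst d n) in *. set (xn1 := fst d (n + 1)%Z) in *.
  assert (Hdxn : dyadic xn) by apply Hdy. assert (Hdxn1 : dyadic xn1) by apply Hdy.
  assert (Hlt : xn < xn1) by apply Hinc.
  set (lo := Rmax a xn). set (hi := Rmin b xn1).
  assert (Dlo : dyadic lo) by (apply dyadic_Rmax; auto).
  assert (Dhi : dyadic hi) by (apply dyadic_Rmin; auto).
  assert (Blo : bar f lo <= t) by (unfold lo, Rmax; destruct Rle_dec; lra).
  assert (Bhi : t <= bar f hi) by (unfold hi, Rmin; destruct Rle_dec; lra).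
  assert (Hlh : lo <= hi) by (apply (bar_le_inv f Hf); auto; lra).
  assert (P1 : a <= lo) by apply Rmax_l. assert (P2 : xn <= lo) by apply Rmax_r.
  assert (P3 : hi <= b) by apply Rmin_l. assert (P4 : hi <= xn1) by apply Rmin_r.
  clearbody lo hi.
  destruct Hlh as [Hlh|Hlh].
  - assert (E : snd d n = g).
    { apply (ga_two_points _ _ lo hi Hlh).
      + transitivity (h lo); [symmetry; apply Hpc; unfold xn, xn1, GA_elt in *; lra | apply Hagr; lra].
      + transitivity (h hi); [symmetry; apply Hpc; unfold xn, xn1, GA_elt in *; lra | apply Hagr; lra]. }
    rewrite E. reflexivity.
  - subst hi. assert (t = bar f lo) by lra. subst t.
    rewrite !theta_bar by auto. f_equal.
    transitivity (h lo); [symmetry; apply Hpc; unfold xn, xn1, GA_elt in *; lra | apply Hagr; lra].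
Qed.


Lemma cont_eps h x : continuity_pt h x -> forall eps, 0 < eps ->
  exists delta, 0 < delta /\ forall y, Rabs (y - x) < delta -> Rabs (h y - h x) < eps.
Proof.
  intros Hc eps He. destruct (Hc eps He) as [alp [Ha H]].
  exists alp; split; auto. intros y Hy.
  destruct (Req_dec y x) as [->|Hne].
  - rewrite Rminus_diag, Rabs_R0; auto.
  - apply (H y). split; [split; [exact I|auto]|]. exact Hy.
Qed.

Lemma ga_inv_l g y : ga_app (ga_inv g) (ga_app g y) = y.
Proof.
  unfold ga_app, ga_inv; simpl. rewrite powerRZ_neg'.
  assert (0 < powerRZ 2 (fst g)) by (apply powerRZ_lt; lra). field. lra.
Qed.

Lemma PL2_comp h1 h2 : is_PL2 h1 -> is_PL2 h2 -> is_PL2 (fun x => h1 (h2 x)).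
Proof.
  intros [[C1 [g1 [Cg1 [L1 R1]]]] [B1 [Dy1 [LF1 Loc1]]]]
         [[C2 [g2 [Cg2 [L2 R2]]]] [B2 [Dy2 [LF2 Loc2]]]].
  split; [split|].
  - apply (continuity_comp h2 h1); auto.
  - exists (fun y => g2 (g1 y)). repeat split.
    + apply (continuity_comp g1 g2); auto.
    + intro x. rewrite L1, L2; auto.
    + intro y. rewrite R2, R1; auto.
  - exists (fun y => B2 y \/ B1 (h2 y)). repeat split.
    + intros b [Hb|Hb]; auto.
      destruct (classic (B2 b)) as [H|H]; auto.
      destruct (Loc2 b H) as [e [He [g [Hg Hag]]]].
      assert (E : h2 b = ga_app g b) by (apply Hag; rewrite Rminus_diag, Rabs_R0; auto).
      rewrite <- (ga_inv_l g b), <- E. apply ga_dyadic; auto. apply ga_inv_valid; auto.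
    + intros a b. destruct (Rle_lt_dec a b) as [Hab|Hab].
      2:{ exists nil. intros; lra. }
      assert (Cab : forall c, a <= c <= b -> continuity_pt h2 c) by auto.
      destruct (continuity_ab_maj h2 a b Hab Cab) as [Mx [HM _]].
      destruct (continuity_ab_min h2 a b Hab Cab) as [mx [Hm _]].
      destruct (LF2 a b) as [l2 Hl2]. destruct (LF1 (h2 mx) (h2 Mx)) as [l1 Hl1].
      exists (l2 ++ map g2 l1). intros x [Hx|Hx] Hxab; apply in_or_app.
      * left; auto.
      * right. rewrite <- (L2 x). apply in_map. apply Hl1; auto.
        all: try (split; [apply Hm|apply HM]; auto).
    + intros x Hx. apply not_or_and in Hx. destruct Hx as [Hx2 Hx1].
      destruct (Loc2 x Hx2) as [e2 [He2 [γ2 [Hγ2 A2]]]].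
      destruct (Loc1 (h2 x) Hx1) as [e1 [He1 [γ1 [Hγ1 A1]]]].
      destruct (cont_eps h2 x (C2 x) e1 He1) as [dl [Hdl Hc]].
      exists (Rmin e2 dl). split. { apply Rmin_glb_lt; auto. }
      exists (ga_comp γ1 γ2). split. { apply ga_comp_valid; auto. }
      intros y Hy. rewrite ga_comp_app.
      assert (Hy2 : Rabs (y - x) < e2) by (eapply Rlt_le_trans; [exact Hy| apply Rmin_l]).
      assert (Hyd : Rabs (y - x) < dl) by (eapply Rlt_le_trans; [exact Hy| apply Rmin_r]).
      rewrite A1 by auto. f_equal. apply A2; auto.
Qed.


Lemma list_min (l : list R) (Q : R -> Prop) (s0 : R) :
  exists s, (s = s0 \/ (In s l /\ Q s)) /\ s <= s0 /\ forall y, In y l -> Q y -> s <= y.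
Proof.
  induction l as [|a l IH].
  - exists s0. repeat split; auto; [lra|]. intros y [].
  - destruct IH as [s [Hs1 [Hs2 Hs3]]].
    destruct (classic (Q a /\ a < s)) as [[Qa Ha]|Hn].
    + exists a. split; [right; split; [left|]; auto|]. split; [lra|].
      intros y [<-|Hy] Qy; [lra|]. specialize (Hs3 y Hy Qy). lra.
    + exists s. split; [destruct Hs1 as [?|[? ?]]; [left|right; split; [right|]]; auto|].
      split; auto. intros y [<-|Hy] Qy; auto.
      destruct (Rle_lt_dec s a); auto. exfalso; auto.
Qed.

Definition cnt (P : R -> Prop) (l : list R) : nat :=
  length (filter (fun y => if excluded_middle_informative (P y) then true else false) l).

Lemma cnt_mono (P P' : R -> Prop) l : (forall y, P' y -> P y) -> (cnt P' l <= cnt P l)%nat.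
Proof.
  intros H. unfold cnt. induction l as [|a l IH]; simpl; auto.
  destruct (excluded_middle_informative (P' a)), (excluded_middle_informative (P a));
    simpl; try lia. exfalso; auto.
Qed.

Lemma cnt_strict (P P' : R -> Prop) l y0 : (forall y, P' y -> P y) ->
  In y0 l -> P y0 -> ~ P' y0 -> (cnt P' l < cnt P l)%nat.
Proof.
  intros H Hin HP HP'. unfold cnt. induction l as [|a l IH]; simpl in *; [contradiction|].
  destruct Hin as [->|Hin].
  - destruct (excluded_middle_informative (P' y0)); [contradiction|].
    destruct (excluded_middle_informative (P y0)); [|contradiction]. simpl.
    pose proof (cnt_mono P P' l H). unfold cnt in H0. lia.
  - specialize (IH Hin).
    destruct (excluded_middle_informative (P' a)), (excluded_middle_informative (P a));
    simpl; try lia. exfalso; auto.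
Qed.

Definition consec (S : R -> Prop) (u v : R) : Prop :=
  u < v /\ dyadic u /\ dyadic v /\ forall y, S y -> u < y -> y < v -> False.

Definition nxt_spec (S : R -> Prop) (t s : R) : Prop :=
  consec S t s /\ s <= t + 1 /\ (S s \/ s = t + 1).

Lemma nxt_exists S t : (forall b, S b -> dyadic b) -> locally_finite S -> dyadic t ->
  exists s, nxt_spec S t s.
Proof.
  intros Dy LF Dt. destruct (LF t (t + 1)) as [l Hl].
  destruct (list_min l (fun y => t < y <= t + 1 /\ S y) (t + 1)) as [s [Hs1 [Hs2 Hs3]]].
  exists s. destruct Hs1 as [->|[Hin [Hq HS]]].
  - split; [split; [lra|split; [auto|split]]|split; [lra|right; auto]].
    + apply dyadic_add; auto. apply dyadic_IZR with (z := 1%Z).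
    + intros y Sy H1 H2. assert (t + 1 <= y) by (apply Hs3; [apply Hl|split]; auto; lra). lra.
  - split; [split; [lra|split; [auto|split]]|split; [lra|left; auto]].
    + auto.
    + intros y Sy H1 H2. assert (s <= y) by (apply Hs3; [apply Hl|split]; auto; lra). lra.
Qed.

Definition nxt (S : R -> Prop) (t : R) : R := epsilon (inhabits 0) (nxt_spec S t).

Fixpoint seq_up (S : R -> Prop) (k : nat) : R :=
  match k with O => 0 | S k => nxt S (seq_up S k) end.

Lemma seq_up_spec S : (forall b, S b -> dyadic b) -> locally_finite S ->
  forall k, dyadic (seq_up S k) /\ nxt_spec S (seq_up S k) (seq_up S (Datatypes.S k)).
Proof.
  intros Dy LF k. induction k as [|k IH].
  - assert (D0 : dyadic (seq_up S 0)) by (apply dyadic_IZR with (z := 0%Z)).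
    split; auto. simpl. unfold nxt. apply epsilon_spec. apply nxt_exists; auto.
  - destruct IH as [_ [[_ [_ [D1 _]]] _]]. split; auto.
    simpl. unfold nxt. apply epsilon_spec. apply nxt_exists; auto.
Qed.

Lemma seq_up_step1 S (Dy : forall b, S b -> dyadic b) (LF : locally_finite S) t0 l
  (Hl : forall x, S x -> t0 <= x <= t0 + 1 -> In x l) j :
  t0 <= seq_up S j ->
  t0 + 1 <= seq_up S (Datatypes.S j) \/
  (t0 <= seq_up S (Datatypes.S j) /\
   lt (cnt (fun y => seq_up S (Datatypes.S j) < y <= t0 + 1 /\ S y) l)
    (cnt (fun y => seq_up S j < y <= t0 + 1 /\ S y) l)).
Proof.
  intros Hj.
  destruct (seq_up_spec S Dy LF j) as [_ [[Hlt [_ [_ Hno]]] [Hle Hor]]].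
  set (u := seq_up S j) in *. set (s := seq_up S (Datatypes.S j)) in *.
  destruct (Rle_lt_dec (t0 + 1) s) as [Hge|Hlt2]; [left; auto|right].
  assert (HSs : S s) by (destruct Hor; auto; lra).
  split; [lra|].
  apply (cnt_strict _ _ l s).
  - intros y [Hy1 Hy2]. split; auto. lra.
  - apply Hl; auto; lra.
  - split; auto; lra.
  - intros [Hy _]. lra.
Qed.

Lemma seq_up_step S : (forall b, S b -> dyadic b) -> locally_finite S ->
  forall k, exists k', seq_up S k + 1 <= seq_up S k'.
Proof.
  intros Dy LF k. set (t0 := seq_up S k).
  destruct (LF t0 (t0 + 1)) as [l Hl].
  assert (Main : forall N j, le (cnt (fun y => seq_up S j < y <= t0 + 1 /\ S y) l) N ->
            t0 <= seq_up S j -> exists k', t0 + 1 <= seq_up S k').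
  { induction N as [|N IHN]; intros j Hc Hj;
      destruct (seq_up_step1 S Dy LF t0 l Hl j Hj) as [H|[H1 H2]].
    - exists (Datatypes.S j); auto.
    - lia.
    - exists (Datatypes.S j); auto.
    - apply (IHN (Datatypes.S j)); auto; lia. }
  apply (Main _ k (le_n _)). unfold t0; lra.
Qed.

Lemma seq_up_unbounded S : (forall b, S b -> dyadic b) -> locally_finite S ->
  forall M, exists k, M < seq_up S k.
Proof.
  intros Dy LF M.
  assert (H : forall N, exists k, INR N <= seq_up S k).
  { induction N as [|N [k Hk]].
    - exists O. simpl. lra.
    - destruct (seq_up_step S Dy LF k) as [k' Hk']. exists k'. rewrite S_INR. lra. }
  destruct (H (Z.to_nat (up M))) as [k Hk]. exists k.
  pose proof (archimed M). rewrite INR_IZR_INZ in Hk.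
  destruct (Z_le_gt_dec 0 (up M)) as [h|h].
  - rewrite Z2Nat.id in Hk by auto. lra.
  - replace (Z.to_nat (up M)) with 0%nat in Hk by lia. simpl in Hk. assert (h2 : (up M < 0)%Z) by lia. apply IZR_lt in h2. lra.
Qed.

Definition reflS (S : R -> Prop) : R -> Prop := fun y => S (- y).

Lemma reflS_dy S : (forall b, S b -> dyadic b) -> forall b, reflS S b -> dyadic b.
Proof. intros Dy b H. rewrite <- (Ropp_involutive b). apply dyadic_opp, Dy; auto. Qed.

Lemma reflS_lf S : locally_finite S -> locally_finite (reflS S).
Proof.
  intros LF a b. destruct (LF (- b) (- a)) as [l Hl]. exists (map Ropp l).
  intros x Hx Hab. rewrite <- (Ropp_involutive x). apply in_map. apply Hl; auto. lra.
Qed.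

Definition xseq (S : R -> Prop) (n : Z) : R :=
  if Z.leb 0 n then seq_up S (Z.to_nat n) else - seq_up (reflS S) (Z.to_nat (- n)).

Lemma xseq_consec S : (forall b, S b -> dyadic b) -> locally_finite S ->
  forall n, consec S (xseq S n) (xseq S (n + 1)).
Proof.
  intros Dy LF n. unfold xseq. destruct (Z_le_gt_dec 0 n) as [h|h].
  - rewrite (proj2 (Z.leb_le 0 n) h), (proj2 (Z.leb_le 0 (n + 1)) ltac:(lia)).
    replace (Z.to_nat (n + 1)) with (Datatypes.S (Z.to_nat n)) by lia.
    apply (seq_up_spec S Dy LF).
  - rewrite (proj2 (Z.leb_gt 0 n) ltac:(lia)).
    replace (Z.to_nat (- n)) with (Datatypes.S (Z.to_nat (- (n + 1)))) by lia.
    assert (E : (if (0 <=? n + 1)%Z then seq_up S (Z.to_nat (n + 1))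
                 else - seq_up (reflS S) (Z.to_nat (- (n + 1))))
                = - seq_up (reflS S) (Z.to_nat (- (n + 1)))).
    { destruct (Z.eq_dec (n + 1) 0) as [e|e].
      - rewrite e. simpl. lra.
      - rewrite (proj2 (Z.leb_gt 0 (n + 1)) ltac:(lia)). reflexivity. }
    rewrite E.
    destruct (seq_up_spec (reflS S) (reflS_dy S Dy) (reflS_lf S LF) (Z.to_nat (- (n + 1))))
      as [_ [[H1 [H2 [H3 H4]]] _]].
    split; [lra|split; [apply dyadic_opp; auto|split; [apply dyadic_opp; auto|]]].
    intros y Sy Hy1 Hy2. apply (H4 (- y)); [unfold reflS; rewrite Ropp_involutive; auto|lra|lra].
Qed.

Lemma xseq_up S : (forall b, S b -> dyadic b) -> locally_finite S ->
  forall M, exists n, M < xseq S n.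
Proof.
  intros Dy LF M. destruct (seq_up_unbounded S Dy LF M) as [k Hk].
  exists (Z.of_nat k). unfold xseq. rewrite (proj2 (Z.leb_le 0 _) (Nat2Z.is_nonneg k)).
  rewrite Nat2Z.id. auto.
Qed.

Lemma xseq_down S : (forall b, S b -> dyadic b) -> locally_finite S ->
  forall M, exists n, xseq S n < M.
Proof.
  intros Dy LF M.
  destruct (seq_up_unbounded (reflS S) (reflS_dy S Dy) (reflS_lf S LF) (- M)) as [k Hk].
  destruct (seq_up_spec (reflS S) (reflS_dy S Dy) (reflS_lf S LF) k) as [_ [[H1 _] _]].
  exists (- Z.of_nat (Datatypes.S k))%Z. unfold xseq.
  rewrite (proj2 (Z.leb_gt 0 (- Z.of_nat (Datatypes.S k))) ltac:(lia)).
  replace (Z.to_nat (- - Z.of_nat (Datatypes.S k))) with (Datatypes.S k) by lia. lra.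
Qed.


Lemma ga_cont g : continuity (ga_app g).
Proof. unfold ga_app. reg. Qed.

Lemma right_ext h m v g : m < v -> continuity h ->
  (forall x, m < x < v -> exists e, 0 < e /\ exists g', forall y, Rabs (y - x) < e -> h y = ga_app g' y) ->
  (exists e, 0 < e /\ forall y, Rabs (y - m) < e -> h y = ga_app g y) ->
  forall y, m <= y <= v -> h y = ga_app g y.
Proof.
  intros Hmv Hc Hloc [e [He Hst]].
  set (E := fun y => m <= y <= v /\ forall z, m <= z <= y -> h z = ga_app g z).
  assert (Hb : bound E) by (exists v; intros y [Hy _]; lra).
  assert (Em : E m).
  { split; [lra|]. intros z Hz. apply Hst. replace (z - m) with 0 by lra. rewrite Rabs_R0; auto. }
  destruct (completeness E Hb (ex_intro _ m Em)) as [s [Hub Hleast]].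
  assert (Hsv : s <= v) by (apply Hleast; intros y [Hy _]; lra).
  assert (key : forall z, m <= z < s -> h z = ga_app g z).
  { intros z Hz. destruct (classic (exists y, E y /\ z < y)) as [[y [[_ Ey] Hzy]]|Hn].
    - apply Ey; lra.
    - exfalso. assert (s <= z); [|lra]. apply Hleast. intros y Ey.
      destruct (Rle_lt_dec y z); auto. exfalso; apply Hn; exists y; auto. }
  set (y0 := Rmin (m + e / 2) v).
  assert (Ey0 : E y0).
  { unfold y0. split. { split; [apply Rmin_glb; lra|apply Rmin_r]. }
    intros z Hz. apply Hst. pose proof (Rmin_l (m + e / 2) v). apply Rabs_def1; lra. }
  assert (Hs0 : y0 <= s) by (apply Hub; auto).
  assert (Hy0m : m < y0) by (unfold y0; apply Rmin_glb_lt; lra).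
  assert (Hseq : s = v).
  { destruct (Req_dec s v) as [?|Hne]; auto. exfalso.
    destruct (Hloc s ltac:(lra)) as [e' [He' [g' Hg']]].
    set (z1 := Rmax m (s - e' / 2)). set (z2 := (z1 + s) / 2).
    assert (Z1a : m <= z1) by apply Rmax_l. assert (Z1b : s - e' / 2 <= z1) by apply Rmax_r.
    assert (Z1c : z1 < s) by (unfold z1; apply Rmax_lub_lt; lra).
    clearbody z1.
    assert (Gg : g = g').
    { apply (ga_two_points g g' z1 z2); [unfold z2; lra| |].
      - transitivity (h z1); [symmetry; apply key; lra | apply Hg'; apply Rabs_def1; lra].
      - transitivity (h z2); [symmetry; apply key; unfold z2; lra | apply Hg'; unfold z2; apply Rabs_def1; lra]. }
    subst g'.
    set (y' := Rmin (s + e' / 2) v).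
    assert (Ey' : E y').
    { unfold y'. pose proof (Rmin_l (s + e' / 2) v). pose proof (Rmin_r (s + e' / 2) v).
      split. { split; [|lra]. apply Rmin_glb; lra. }
      intros z Hz. destruct (Rlt_le_dec z s).
      - apply key; lra.
      - apply Hg'. apply Rabs_def1; lra. }
    assert (y' <= s) by (apply Hub; auto).
    assert (s < y') by (unfold y'; apply Rmin_glb_lt; lra). lra. }
  subst s.
  intros y Hy. destruct (Rlt_le_dec y v) as [Hl|Hl]; [apply key; lra|].
  assert (y = v) by lra. subst y.
  set (phi := fun y => h y - ga_app g y).
  assert (Cphi : continuity_pt phi v).
  { unfold phi. apply continuity_pt_minus; auto. apply ga_cont. }
  destruct (Req_dec (phi v) 0) as [H0|H0]; [unfold phi in H0; lra|].
  exfalso. assert (Hp : 0 < Rabs (phi v)) by (apply Rabs_pos_lt; auto).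
  destruct (cont_eps phi v Cphi _ Hp) as [dl [Hdl Hd]].
  set (y := v - Rmin dl (v - m) / 2).
  assert (Hy1 : Rmin dl (v - m) > 0) by (apply Rmin_glb_lt; lra).
  pose proof (Rmin_l dl (v - m)). pose proof (Rmin_r dl (v - m)).
  assert (Py : phi y = 0) by (unfold phi; rewrite key; [ring|unfold y; lra]).
  specialize (Hd y). rewrite Py in Hd.
  replace (0 - phi v) with (- phi v) in Hd by ring. rewrite Rabs_Ropp in Hd.
  assert (Rabs (phi v) < Rabs (phi v)); [|lra].
  apply Hd. unfold y. apply Rabs_def1; lra.
Qed.

Lemma ga_refl g y : ga_app (fst g, - snd g) y = - ga_app g (- y).
Proof. unfold ga_app; simpl. ring. Qed.

Lemma left_ext h u m g : u < m -> continuity h ->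
  (forall x, u < x < m -> exists e, 0 < e /\ exists g', forall y, Rabs (y - x) < e -> h y = ga_app g' y) ->
  (exists e, 0 < e /\ forall y, Rabs (y - m) < e -> h y = ga_app g y) ->
  forall y, u <= y <= m -> h y = ga_app g y.
Proof.
  intros Hum Hc Hloc [e [He Hst]] y Hy.
  set (h' := fun y => - h (- y)).
  assert (R := right_ext h' (- m) (- u) (fst g, - snd g)).
  assert (Hh : h' (- y) = ga_app (fst g, - snd g) (- y)).
  { apply R; try lra.
    - intro x. unfold h'. apply continuity_pt_opp.
      apply (continuity_pt_comp (fun y => - y) h x); [reg | apply Hc].
    - intros x Hx. destruct (Hloc (- x) ltac:(lra)) as [e' [He' [g' Hg']]].
      exists e'. split; auto. exists (fst g', - snd g'). intros z Hz.
      unfold h'. rewrite ga_refl, Hg'; auto.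
      replace (- z - - x) with (- (z - x)) by ring. rewrite Rabs_Ropp; auto.
    - exists e. split; auto. intros z Hz. unfold h'. rewrite ga_refl, Hst; auto.
      replace (- z - m) with (- (z - - m)) by ring. rewrite Rabs_Ropp; auto. }
  unfold h' in Hh. rewrite ga_refl, !Ropp_involutive in Hh. lra.
Qed.

Lemma piece h u v : u < v -> continuity h ->
  (forall x, u < x < v -> exists e, 0 < e /\ exists g, GA_valid g /\
     forall y, Rabs (y - x) < e -> h y = ga_app g y) ->
  exists g, GA_valid g /\ forall y, u <= y <= v -> h y = ga_app g y.
Proof.
  intros Huv Hc Hloc. set (m := (u + v) / 2).
  destruct (Hloc m ltac:(unfold m; lra)) as [e [He [g [Hg Hag]]]].
  exists g. split; auto.
  assert (Hloc' : forall x, u < x < v -> exists e, 0 < e /\ exists g', forall y, Rabs (y - x) < e -> h y = ga_app g' y).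
  { intros x Hx. destruct (Hloc x Hx) as [e1 [He1 [g1 [_ H1]]]]. exists e1; split; auto. exists g1; auto. }
  intros y Hy. destruct (Rle_lt_dec y m).
  - apply (left_ext h u m g); auto; [unfold m; lra| |exists e; auto|lra].
    intros x Hx. apply Hloc'. unfold m in Hx; lra.
  - apply (right_ext h m v g); auto; [unfold m; lra| |exists e; auto|lra].
    intros x Hx. apply Hloc'. unfold m in Hx; lra.
Qed.


Lemma PL2_data h : is_PL2 h -> exists d, PL_data h d.
Proof.
  intros [[Hc _] [B [Dy [LF Loc]]]].
  set (x := xseq B).
  set (gam := fun n => epsilon (inhabits (0%Z, 0))
        (fun g => GA_valid g /\ forall y, x n <= y <= x (n + 1)%Z -> h y = ga_app g y)).
  assert (Hg : forall n, GA_valid (gam n) /\ forall y, x n <= y <= x (n + 1)%Z -> h y = ga_app (gam n) y).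
  { intro n. unfold gam. apply epsilon_spec.
    destruct (xseq_consec B Dy LF n) as [Hlt [_ [_ Hno]]].
    apply piece; auto. intros z Hz. apply Loc. intro Bz. apply (Hno z); tauto. }
  exists (x, gam). unfold PL_data; simpl.
  split; [|split; [|split; [|split; [|split]]]].
  - intro n. apply (xseq_consec B Dy LF n).
  - intro n. apply (xseq_consec B Dy LF n).
  - apply xseq_up; auto.
  - apply xseq_down; auto.
  - intro n. apply Hg.
  - intros n y Hy. apply Hg; auto.
Qed.



Theorem mainTheorem6 (f : R -> R)
  (Hf : homeo_plus f)
  (Hf1 : forall x, f (x + 1) = f x + 2)
  (Hf0 : f 0 = 0) :
  forall h1 h2 : R -> R, is_PL2 h1 -> is_PL2 h2 ->
  forall t, theta_PL f (fun x => h1 (h2 x)) t = theta_PL f h1 (theta_PL f h2 t).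
Proof.
  intros h1 h2 P1 P2 t.
  assert (HF : Fok f) by (split; [|split]; auto).
  destruct (PL2_data h2 P2) as [d2 D2].
  destruct (PL2_data h1 P1) as [d1 D1].
  destruct (data_bracket f h2 d2 HF D2 t) as [n Hn].
  pose proof D2 as [Hinc2 [Hdy2 [_ [_ [Hval2 Hpc2]]]]].
  pose proof D1 as [Hinc1 [Hdy1 [_ [_ [Hval1 Hpc1]]]]].
  set (g := snd d2 n) in *. set (xn := fst d2 n) in *. set (xn1 := fst d2 (n+1)%Z) in *.
  assert (Hg : GA_valid g) by apply Hval2.
  assert (Dxn : dyadic xn) by apply Hdy2. assert (Dxn1 : dyadic xn1) by apply Hdy2.
  assert (Lxn : xn < xn1) by apply Hinc2.
  assert (Agr2 : forall y, xn <= y <= xn1 -> h2 y = ga_app g y) by (intros; apply Hpc2; auto).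
  assert (E2 : theta_PL f h2 t = theta_GA f g t).
  { apply (L_agree f h2 xn xn1); auto; [exists d2; auto | lra]. }
  rewrite E2. set (s := theta_GA f g t).
  destruct (data_bracket f h1 d1 HF D1 s) as [m Hm].
  set (dl := snd d1 m) in *. set (ym := fst d1 m) in *. set (ym1 := fst d1 (m+1)%Z) in *.
  assert (Hdl : GA_valid dl) by apply Hval1.
  assert (Dym : dyadic ym) by apply Hdy1. assert (Dym1 : dyadic ym1) by apply Hdy1.
  assert (Agr1 : forall y, ym <= y <= ym1 -> h1 y = ga_app dl y) by (intros; apply Hpc1; auto).
  assert (E1 : theta_PL f h1 s = theta_GA f dl s).
  { apply (L_agree f h1 ym ym1); auto; [exists d1; auto | lra]. }
  rewrite E1. unfold s. rewrite <- theta_comp by auto.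
  set (wm := ga_app (ga_inv g) ym). set (wm1 := ga_app (ga_inv g) ym1).
  assert (Dwm : dyadic wm) by (apply ga_dyadic; auto; apply ga_inv_valid; auto).
  assert (Dwm1 : dyadic wm1) by (apply ga_dyadic; auto; apply ga_inv_valid; auto).
  assert (Gwm : ga_app g wm = ym) by apply ga_inv_r.
  assert (Gwm1 : ga_app g wm1 = ym1) by apply ga_inv_r.
  assert (Bwm : bar f wm <= t).
  { apply (theta_le_inv f HF g). rewrite theta_bar, Gwm by auto. fold s. lra. }
  assert (Bwm1 : t <= bar f wm1).
  { apply (theta_le_inv f HF g). rewrite theta_bar, Gwm1 by auto. fold s. lra. }
  set (a := Rmax xn wm). set (b := Rmin xn1 wm1).
  assert (Da : dyadic a) by (apply dyadic_Rmax; auto).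
  assert (Db : dyadic b) by (apply dyadic_Rmin; auto).
  assert (Ba : bar f a <= t) by (unfold a, Rmax; destruct Rle_dec; lra).
  assert (Bb : t <= bar f b) by (unfold b, Rmin; destruct Rle_dec; lra).
  assert (Q1 : xn <= a) by apply Rmax_l. assert (Q2 : wm <= a) by apply Rmax_r.
  assert (Q3 : b <= xn1) by apply Rmin_l. assert (Q4 : b <= wm1) by apply Rmin_r.
  clearbody a b.
  apply (L_agree f _ a b); auto.
  - apply PL2_data, PL2_comp; auto.
  - apply ga_comp_valid; auto.
  - intros y Hy. rewrite ga_comp_app, Agr2 by lra. apply Agr1.
    split.
    + rewrite <- Gwm. apply ga_le. lra.
    + rewrite <- Gwm1. apply ga_le. lra.
Qed.
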